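(* Let $\mathcal{X}=\langle P,K,V\rangle$ be a polyhedral model. The logical equivalence relation $\equiv$ on $P$ is a simplicial bisimulation.
   Context: A $d$-simplex $\sigma\subseteq\mathbb{R}^m$ is the convex hull of $d+1$ affinely independent points $v_0,\dots,v_d$ (its vertices); the simplexes spanned by subsets of the vertices (including the empty simplex) are its faces, and $\tau\preceq\sigma$ means $\tau$ is a face of $\sigma$. The relative interior of $\sigma$ is $\tilde\sigma=\{\sum_i\lambda_iv_i:\lambda_i\in(0,1],\sum_i\lambda_i=1\}$. A simplicial complex $K$ is a finite set of simplexes of $\mathbb{R}^m$ closed under taking faces and such that the intersection of any two of its simplexes is a face of both. Its polyhedron is $|K|=\bigcup K$, with the subspace topology of $\mathbb{R}^m$; $\mathcal{C}$ and $\mathcal{I}$ denote closure and interior in this space. The cells of $K$ are the sets $\tilde\sigma$ for nonempty $\sigma\in K$; they form a partition $\tilde K$ of $|K|$. A path in a space $P$ is a continuous $\pi:[0,1]\to P$; $\pi(S)=\{\pi(s):s\in S\}$. Fix a finite set $AP$ of atomic propositions. A polyhedral model is $\mathcal{X}=\langle P,K,V\rangle$ with $K$ a simplicial complex, $P=|K|$, and $V:AP\to\mathcal{P}(P)$ such that each $V(p)$ is a union of cells of $K$ ($K$ is then called coherent with the model). SLCS formulas: $\phi::=\top\mid p\mid\neg\phi\mid\phi\wedge\phi\mid\Box\phi\mid\gamma(\phi,\phi)$, $p\in AP$. Semantics at $x\in P$, with $[\![\phi]\!]=\{x\in P:\mathcal{X},x\models\phi\}$: $\top$ always holds; $x\models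 p$ iff $x\in V(p)$; Boolean connectives as usual; $x\models\Box\phi$ iff $x\in\mathcal{I}([\![\phi]\!])$; $x\models\gamma(\phi,\psi)$ iff there is a path $\pi$ in $P$ with $\pi(0)=x$, $\pi((0,1))\subseteq[\![\phi]\!]$ and $\pi(1)\in[\![\psi]\!]$. Logical equivalence $\equiv$ on $P$: $x\equiv y$ iff $x$ and $y$ satisfy exactly the same SLCS formulas. A path $\pi$ is simplicial (w.r.t. $K$) if there are $s_0=0<s_1<\dots<s_k=1$ and cells $\tilde\sigma_1,\dots,\tilde\sigma_k$ of $K$ with $\pi((s_{i-1},s_i))\subseteq\tilde\sigma_i$ for all $i$. For $R\subseteq P\times P$, paths satisfy $\pi_1\hat R\pi_2$ iff $\pi_1(t)\,R\,\pi_2(t)$ for all $t\in[0,1]$. A relation $\sim\subseteq P\times P$ is a simplicial bisimulation if whenever $x\sim y$: (1) for all $p\in AP$, $x\in V(p)\iff y\in V(p)$; (2) for every simplicial path $\pi_x$ with $\pi_x(0)=x$ there is a simplicial path $\pi_y$ with $\pi_y(0)=y$ and $\pi_x\hat\sim\pi_y$; (3) for every simplicial path $\pi_y$ with $\pi_y(0)=y$ there is a simplicial path $\pi_x$ with $\pi_x(0)=x$ and $\pi_x\hat\sim\pi_y$. *)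

(* Defs.v *)
From HB Require Import structures.
From mathcomp Require Import all_boot all_order all_algebra.
From mathcomp Require Import finmap.
From mathcomp Require Import all_classical all_reals all_analysis.
Set Implicit Arguments. Unset Strict Implicit. Unset Printing Implicit Defensive.
Import Order.TTheory GRing.Theory Num.Theory.
Import numFieldNormedType.Exports.
Local Open Scope classical_set_scope.
Local Open Scope ring_scope.

Section Polyhedral.
Variables (R : realType) (m : nat).
Notation point := 'rV[R]_m.

(* A simplex is represented by its (finite) vertex set. *)
Definition aff_indep (A : {fset point}) : Prop :=
  forall lam : point -> R,
    \sum_(v <- A) lam v = 0 -> \sum_(v <- A) lam v *: v = 0 ->
    forall v, v \in A -> lam v = 0.

Definition conv (A : {fset point}) : set point :=
  [set x | exists lam : point -> R,
     [/\ (forall v, v \in A -> 0 <= lam v <= 1),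
         \sum_(v <- A) lam v = 1 & x = \sum_(v <- A) lam v *: v]].

Definition relint (A : {fset point}) : set point :=
  [set x | exists lam : point -> R,
     [/\ (forall v, v \in A -> 0 < lam v <= 1),
         \sum_(v <- A) lam v = 1 & x = \sum_(v <- A) lam v *: v]].

Definition simplicial_complex (K : {fset {fset point}}) : Prop :=
  [/\ (forall A, A \in K -> aff_indep A),
      (forall A B, A \in K -> (B `<=` A)%fset -> B \in K) &
      (forall A B, A \in K -> B \in K ->
         (exists2 C, (C `<=` A)%fset & conv C = conv A `&` conv B) /\
         (exists2 D, (D `<=` B)%fset & conv D = conv A `&` conv B))].

Definition polyhedron (K : {fset {fset point}}) : set point :=
  [set x | exists2 A, A \in K & conv A x].

(* cells of K: relative interiors of nonempty simplexes *)
Definition is_cell_of (K : {fset {fset point}}) (A : {fset point}) : Prop :=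
  A \in K /\ A != fset0.

Definition polyhedral_model (AP : finType) (K : {fset {fset point}})
    (V : AP -> set point) : Prop :=
  simplicial_complex K /\
  forall p : AP, exists S : set {fset point},
    S `<=` is_cell_of K /\ V p = \bigcup_(A in S) relint A.

Definition sub_interior (P S : set point) : set point :=
  [set x | P x /\ exists U : set point, [/\ open U, U x & U `&` P `<=` S]].

Definition unit_I : set R := [set t | 0 <= t <= 1].
Definition open_unit_I : set R := [set t | 0 < t < 1].

(* a path in P: continuous map [0,1] -> P (values outside [0,1] irrelevant) *)
Definition is_path (P : set point) (pi : R -> point) : Prop :=
  {within unit_I, continuous pi} /\ (forall t, unit_I t -> P (pi t)).

Inductive formula (AP : Type) : Type :=
  | FTop : formula AP
  | FAtom : AP -> formula AP
  | FNeg : formula AP -> formula AP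
  | FAnd : formula AP -> formula AP -> formula AP
  | FBox : formula AP -> formula AP
  | FGamma : formula AP -> formula AP -> formula AP.

Fixpoint sem (AP : Type) (K : {fset {fset point}}) (V : AP -> set point)
    (phi : formula AP) : set point :=
  let P := polyhedron K in
  match phi with
  | FTop => P
  | FAtom p => V p
  | FNeg f => P `\` sem K V f
  | FAnd f g => sem K V f `&` sem K V g
  | FBox f => sub_interior P (sem K V f)
  | FGamma f g => [set x | P x /\ exists pi : R -> point,
       [/\ is_path P pi, pi 0 = x, pi @` open_unit_I `<=` sem K V f
         & sem K V g (pi 1)]]
  end.

Definition log_equiv (AP : Type) (K : {fset {fset point}}) (V : AP -> set point)
    (x y : point) : Prop :=
  polyhedron K x /\ polyhedron K y /\
  forall phi : formula AP, sem K V phi x <-> sem K V phi y.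

Definition simplicial_path (K : {fset {fset point}}) (pi : R -> point) : Prop :=
  is_path (polyhedron K) pi /\
  exists (k : nat) (s : nat -> R) (sigma : nat -> {fset point}),
    [/\ s 0%N = 0, s k = 1,
        (forall i, (i < k)%N -> s i < s i.+1) &
        (forall i, (1 <= i <= k)%N ->
           is_cell_of K (sigma i) /\
           pi @` [set t | s i.-1 < t < s i] `<=` relint (sigma i))].

Definition path_rel (Rel : point -> point -> Prop) (p1 p2 : R -> point) : Prop :=
  forall t, unit_I t -> Rel (p1 t) (p2 t).

Definition simplicial_bisimulation (AP : Type) (K : {fset {fset point}})
    (V : AP -> set point) (Rel : point -> point -> Prop) : Prop :=
  (forall x y, Rel x y -> polyhedron K x /\ polyhedron K y) /\
  forall x y, Rel x y ->
    [/\ (forall p : AP, V p x <-> V p y),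
        (forall px, simplicial_path K px -> px 0 = x ->
           exists2 py, simplicial_path K py /\ py 0 = y & path_rel Rel px py) &
        (forall py, simplicial_path K py -> py 0 = y ->
           exists2 px, simplicial_path K px /\ px 0 = x & path_rel Rel px py)].

End Polyhedral.

(* Main.v *)
From Pilot Require Import Defs.
From HB Require Import structures.
From mathcomp Require Import all_boot all_order all_algebra.
From mathcomp Require Import finmap.
From mathcomp Require Import all_classical all_reals all_analysis.
From mathcomp Require Import ring lra zify.
Set Implicit Arguments. Unset Strict Implicit. Unset Printing Implicit Defensive.
Import Order.TTheory GRing.Theory Num.Theory.
Import numFieldNormedType.Exports.
Import Pilot.Defs.
Local Open Scope classical_set_scope.
Local Open Scope ring_scope.


Section Bary.
Variables (R : realType) (m : nat).
Local Notation point := 'rV[R]_m.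
Implicit Types A B C : {fset point}.

Lemma aff_uniq A (lam mu : point -> R) : aff_indep A ->
  \sum_(v <- A) lam v = \sum_(v <- A) mu v ->
  \sum_(v <- A) lam v *: v = \sum_(v <- A) mu v *: v ->
  forall v, v \in A -> lam v = mu v.
Proof.
move=> hA h1 h2 v vA; apply/eqP; rewrite -subr_eq0; apply/eqP.
apply: (hA (fun v => lam v - mu v)) => //.
  by rewrite sumrB h1 subrr.
by under eq_bigr do rewrite scalerBl; rewrite sumrB h2 subrr.
Qed.

Lemma relint_conv A : relint A `<=` conv A.
Proof.
move=> x [lam [h1 h2 h3]]; exists lam; split => // v vA.
by have /andP[/ltW -> ->] := h1 v vA.
Qed.

Lemma sum_ext B A (F : point -> R) (G : point -> point) : (B `<=` A)%fset ->
  (\sum_(v <- A) (if v \in B then F v else 0) = \sum_(v <- B) F v) /\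
  (\sum_(v <- A) (if v \in B then F v else 0) *: G v = \sum_(v <- B) F v *: G v).
Proof.
move=> BA; split.
  rewrite -(big_fset_incl _ BA); last by move=> x _ /negbTE ->.
  by rewrite big_seq_cond [RHS]big_seq_cond; apply: eq_bigr => i /andP[-> _].
rewrite -(big_fset_incl _ BA); last by move=> x _ /negbTE ->; rewrite scale0r.
by rewrite big_seq_cond [RHS]big_seq_cond; apply: eq_bigr => i /andP[-> _].
Qed.

Lemma conv_sub B A : (B `<=` A)%fset -> conv B `<=` conv A.
Proof.
move=> BA x [lam [h1 h2 h3]].
exists (fun v => if v \in B then lam v else 0); split.
- by move=> v _; case: ifP => // vB; [exact: h1 | rewrite lexx ler01].
- by rewrite (sum_ext _ _ BA).1.
- by rewrite (sum_ext _ _ BA).2.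
Qed.

Lemma conv_support A x : conv A x ->
  exists2 B, (B `<=` A)%fset & B != fset0 /\ relint B x.
Proof.
move=> [lam [h1 h2 h3]].
pose B := [fset v in A | 0 < lam v]%fset.
have BA : (B `<=` A)%fset by apply/fsubsetP => v; rewrite !inE /= => /andP[].
have Hz : forall v, v \in A -> v \notin B -> lam v = 0.
  move=> v vA; rewrite !inE /= vA /= => /negP hv.
  have /andP[h0 _] := h1 v vA; apply/eqP; rewrite eq_le h0 andbT.
  by rewrite leNgt; apply/negP.
have e1 : \sum_(v <- B) lam v = \sum_(v <- A) lam v.
  by apply: big_fset_incl => // v; apply: Hz.
have e2 : \sum_(v <- B) lam v *: v = \sum_(v <- A) lam v *: v.
  by apply: big_fset_incl => // v vA vB; rewrite Hz // scale0r.
exists B => //; split.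
  apply/negP => /eqP B0; move: e1; rewrite B0 big_seq_fset0 h2 => /eqP.
  by rewrite eq_sym oner_eq0.
exists lam; split; rewrite ?e1 ?e2 //.
move=> v; rewrite !inE /= => /andP[vA ->] /=.
by have /andP[_ ->] := h1 v vA.
Qed.

Lemma relint_sub A C x : aff_indep A -> (C `<=` A)%fset -> relint A x ->
  conv C x -> (A `<=` C)%fset.
Proof.
move=> hA CA [lam [h1 h2 h3]] [mu [k1 k2 k3]].
have H := aff_uniq (lam := lam) (mu := fun v => if v \in C then mu v else 0) hA.
have {}H := H _ _; rewrite (sum_ext mu id CA).1 (sum_ext mu id CA).2 in H.
have {}H := H (etrans h2 (esym k2)) (etrans (esym h3) k3).
apply/fsubsetP => v vA; have := H v vA; case: ifP => // _ e.
by have /andP[] := h1 v vA; rewrite e ltxx.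
Qed.

Lemma sum_pos_exists (s : seq point) (F : point -> R) :
  (\sum_(v <- s) F v != 0) -> exists2 v, v \in s & F v != 0.
Proof.
elim: s => [|a s IH]; first by rewrite big_nil eqxx.
rewrite big_cons; have [Fa|Fa] := eqVneq (F a) 0.
  by rewrite Fa add0r => /IH [v vs Fv]; exists v => //; rewrite inE vs orbT.
by move=> _; exists a => //; rewrite inE eqxx.
Qed.

Lemma sum_ge_term (s : seq point) (F : point -> R) v : uniq s -> v \in s ->
  (forall w, w \in s -> 0 <= F w) -> F v <= \sum_(w <- s) F w.
Proof.
move=> us vs F0; rewrite (bigD1_seq v) //= lerDl.
by rewrite big_seq_cond sumr_ge0 // => i /andP[/F0].
Qed.

Lemma extreme A B a : aff_indep A -> a \in A ->
  (forall b, b \in B -> conv A b) -> conv B a -> a \in B.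
Proof.
move=> hA aA BA [mu [k1 k2 k3]].
have /choice [nu Hnu] : forall b, exists nu : point -> R, b \in B ->
   [/\ forall v, v \in A -> 0 <= nu v <= 1, \sum_(v <- A) nu v = 1
     & b = \sum_(v <- A) nu v *: v].
  move=> b; case: (boolP (b \in B)) => bB; last by exists (fun _ => 0).
  by have [nu Hn] := BA b bB; exists nu.
pose ka v := \sum_(b <- B) mu b * nu b v.
pose de (v : point) : R := (v == a)%:R.
have ede : forall (G : point -> point), \sum_(v <- A) de v *: G v = G a.
  move=> G; rewrite (bigD1_seq a) //= /de eqxx scale1r big1 ?addr0 //.
  by move=> i /negbTE ->; rewrite scale0r.
have sde : \sum_(v <- A) de v = 1.
  rewrite (bigD1_seq a) //= /de eqxx big1 ?addr0 //.
  by move=> i /negbTE ->.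
have Hka : forall v, v \in A -> ka v = de v.
  apply: aff_uniq hA _ _.
    rewrite sde /ka exchange_big /= -k2 big_seq [RHS]big_seq; apply: eq_bigr => b bB.
    by rewrite -mulr_sumr; have [_ -> _] := Hnu b bB; rewrite mulr1.
  rewrite (ede id) /= {1}k3 /ka.
  under eq_bigr do rewrite scaler_suml.
  rewrite exchange_big /= big_seq [RHS]big_seq; apply: eq_bigr => b bB.
  have [_ _ eb] := Hnu b bB; symmetry; rewrite [X in _ *: X]eb scaler_sumr; apply: eq_bigr => v _; by rewrite scalerA.
apply: contraT => aB.
have [b bB mub] : exists2 b, b \in B & mu b != 0.
  by apply: sum_pos_exists; rewrite k2 oner_neq0.
have mubp : 0 < mu b by rewrite lt0r mub; case/andP: (k1 b bB).
have [v0 v0A nv0] : exists2 v, v \in A & (v != a) && (nu b v != 0).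
  case: (pselect (exists2 v, v \in A & (v != a) && (nu b v != 0))) => [//|H]; exfalso.
  have Hz : forall v, v \in A -> v != a -> nu b v = 0.
    move=> v vA va; apply/eqP; apply: contraT => nz; exfalso; apply: H.
    by exists v => //; rewrite va nz.
  have eb : b = nu b a *: a.
    have [_ _ {1}->] := Hnu b bB; rewrite (bigD1_seq a) //= big1_seq ?addr0 //.
    by move=> v /andP[va vA]; rewrite Hz // scale0r.
  have ea : nu b a = 1.
    have [_ <- _] := Hnu b bB; rewrite (bigD1_seq a) //= big1_seq ?addr0 //.
    by move=> v /andP[va vA]; rewrite Hz.
  by move: bB; rewrite eb ea scale1r (negbTE aB).
case/andP: nv0 => va nz.
have : 0 < ka v0.
  apply: (lt_le_trans (y := mu b * nu b v0)).
    have [H1 _ _] := Hnu b bB; by rewrite mulr_gt0 // lt0r nz; case/andP: (H1 v0 v0A).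
  apply: (sum_ge_term (F := fun b => mu b * nu b v0) (fset_uniq B) bB) => w wB.
  apply: mulr_ge0; first by case/andP: (k1 w wB).
  have [H1 _ _] := Hnu w wB; by case/andP: (H1 v0 v0A).
by rewrite Hka // /de (negbTE va) ltxx.
Qed.

End Bary.


Section Cx.
Variables (R : realType) (m : nat).
Local Notation point := 'rV[R]_m.
Implicit Types A B C : {fset point}.

Definition lerp (p q : point) (l : R) : point := (1 - l) *: p + l *: q.

Lemma vert_conv A a : a \in A -> conv A a.
Proof.
move=> aA; exists (fun v => (v == a)%:R); split.
- by move=> v _; case: (v == a); rewrite /= ?lexx ?ler01.
- by rewrite (bigD1_seq a) //= eqxx big1 ?addr0 // => i /negbTE ->.
- rewrite (bigD1_seq a) //= eqxx scale1r big1 ?addr0 //.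
  by move=> i /negbTE ->; rewrite scale0r.
Qed.

Lemma seg_gen A p q l (mu nu : point -> R) :
  \sum_(v <- A) mu v = 1 -> p = \sum_(v <- A) mu v *: v ->
  \sum_(v <- A) nu v = 1 -> q = \sum_(v <- A) nu v *: v ->
  \sum_(v <- A) ((1 - l) * mu v + l * nu v) = 1 /\
  lerp p q l = \sum_(v <- A) ((1 - l) * mu v + l * nu v) *: v.
Proof.
move=> s1 e1 s2 e2; split.
  by rewrite big_split /= -!mulr_sumr s1 s2 !mulr1 subrK.
rewrite /lerp e1 e2 !scaler_sumr -big_split /=; apply: eq_bigr => v _.
by rewrite !scalerA -scalerDl.
Qed.

Lemma seg_relint A p q l : conv A p -> relint A q -> 0 < l <= 1 ->
  relint A (lerp p q l).
Proof.
move=> [mu [k1 k2 k3]] [nu [h1 h2 h3]] /andP[l0 l1].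
have [s e] := seg_gen l k2 k3 h2 h3.
exists (fun v => (1 - l) * mu v + l * nu v); split => // v vA.
have /andP[a1 a2] := k1 v vA; have /andP[b1 b2] := h1 v vA.
apply/andP; split; nra.
Qed.

Lemma seg_conv A p q l : conv A p -> conv A q -> 0 <= l <= 1 ->
  conv A (lerp p q l).
Proof.
move=> [mu [k1 k2 k3]] [nu [h1 h2 h3]] /andP[l0 l1].
have [s e] := seg_gen l k2 k3 h2 h3.
exists (fun v => (1 - l) * mu v + l * nu v); split => // v vA.
have /andP[a1 a2] := k1 v vA; have /andP[b1 b2] := h1 v vA.
apply/andP; split; nra.
Qed.

Lemma lerp0 p q : lerp p q 0 = p.
Proof. by rewrite /lerp subr0 scale1r scale0r addr0. Qed.
Lemma lerp1 p q : lerp p q 1 = q.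
Proof. by rewrite /lerp subrr scale0r scale1r add0r. Qed.

Variable K : {fset {fset point}}.
Hypothesis hK : simplicial_complex K.

Lemma sc_indep A : A \in K -> aff_indep A.
Proof. by case: hK => h _ _; apply: h. Qed.

Lemma sc_face A B : A \in K -> (B `<=` A)%fset -> B \in K.
Proof. by case: hK => _ h _; apply: h. Qed.

Lemma carrier_uniq A B x : A \in K -> B \in K -> relint A x -> relint B x -> A = B.
Proof.
move=> AK BK xA xB.
have [[C CA eC] [D DB eD]] : _ := (let: And3 _ _ h := hK in h) A B AK BK.
have sAB : conv A `<=` conv B.
  have xC : conv C x by rewrite eC; split; apply: relint_conv.
  have AC := relint_sub (sc_indep AK) CA xA xC.
  by move=> y /(conv_sub AC); rewrite eC => -[].
have sBA : conv B `<=` conv A.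
  have xD : conv D x by rewrite eD; split; apply: relint_conv.
  have BD := relint_sub (sc_indep BK) DB xB xD.
  by move=> y /(conv_sub BD); rewrite eD => -[].
apply/fsetP => a; apply/idP/idP => aX.
  apply: (extreme (sc_indep AK) aX) => [b bB|].
    by apply: sBA; apply: vert_conv.
  by apply: sAB; apply: vert_conv.
apply: (extreme (sc_indep BK) aX) => [b bA|].
  by apply: sAB; apply: vert_conv.
by apply: sBA; apply: vert_conv.
Qed.

Lemma conv_carrier A B x : A \in K -> B \in K -> relint A x -> conv B x ->
  (A `<=` B)%fset.
Proof.
move=> AK BK xA /conv_support [B' B'B [_ xB']].
by rewrite (carrier_uniq AK (sc_face BK B'B) xA xB').
Qed.

Lemma conv_poly A : A \in K -> conv A `<=` polyhedron K.
Proof. by move=> AK x xA; exists A. Qed.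

Lemma relint_poly A : A \in K -> relint A `<=` polyhedron K.
Proof. by move=> AK x /relint_conv; apply: conv_poly. Qed.

Lemma poly_cell x : polyhedron K x ->
  exists A, [/\ A \in K, A != fset0 & relint A x].
Proof.
move=> [B BK /conv_support [A AB [A0 xA]]].
by exists A; split => //; apply: sc_face AB.
Qed.

End Cx.


Section Top.
Variables (R : realType) (m : nat).
Local Notation point := 'rV[R]_m.
Implicit Types A B C : {fset point}.

Lemma cont_sum (T : topologicalType) (I : Type) (s : seq I) (f : I -> T -> point) :
  (forall i, continuous (f i)) -> continuous (fun x => \sum_(i <- s) f i x).
Proof.
move=> fc; elim: s => [|a s IH].
  by under eq_fun do rewrite big_nil; apply: cst_continuous.
under eq_fun do rewrite big_cons.
move=> x; apply: (@continuousD _ _ _ (f a) (fun x => \sum_(i <- s) f i x)); [exact: fc | exact: IH].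
Qed.

Lemma cont_sumR (T : topologicalType) (I : Type) (s : seq I) (f : I -> T -> R) :
  (forall i, continuous (f i)) -> continuous (fun x => \sum_(i <- s) f i x).
Proof.
move=> fc; elim: s => [|a s IH].
  by under eq_fun do rewrite big_nil; apply: cst_continuous.
under eq_fun do rewrite big_cons.
move=> x; apply: (@continuousD _ _ _ (f a) (fun x => \sum_(i <- s) f i x)); [exact: fc | exact: IH].
Qed.

Lemma conv_closed A : closed (conv A).
Proof.
pose n := size A.
pose e i := nth (0 : point) A i.
pose Fm (w : 'rV[R]_n) : point := \sum_(i < n) w ord0 i *: e i.
pose D := [set w : 'rV[R]_n | forall i, `[0, 1]%classic (w ord0 i)] `&`
          [set w : 'rV[R]_n | \sum_(i < n) w ord0 i = 1].
have -> : conv A = Fm @` D.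
  apply/seteqP; split => x.
    move=> [lam [h1 h2 h3]]; exists (\row_i lam (e i)).
      split => /=.
        move=> i; rewrite mxE /= in_itv /=; apply: h1.
        by rewrite /e mem_nth.
      under eq_bigr do rewrite mxE.
      by rewrite -h2 (big_nth 0) big_mkord.
    rewrite h3 /Fm (big_nth 0) big_mkord; apply: eq_bigr => i _.
    by rewrite mxE.
  move=> [w [wI ws] <-].
  pose lam (v : point) := if @insub _ (fun k : nat => (k < n)%N) 'I_n (index v A) is Some i
    then w ord0 i else 0.
  have le : forall i : 'I_n, lam (e i) = w ord0 i.
    move=> i; rewrite /lam /e index_uniq ?fset_uniq //.
    rewrite (insubT (fun k : nat => (k < n)%N) (ltn_ord i)) /=.
    by congr (w ord0 _); apply: val_inj.
  exists lam; split.
  - move=> v vA; have vi : (index v A < n)%N by rewrite index_mem.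
    rewrite /lam (insubT (fun k : nat => (k < n)%N) vi) /=.
    by have := wI (Sub (index v A) vi); rewrite /= in_itv.
  - by rewrite (big_nth 0) big_mkord -ws; apply: eq_bigr => i _; rewrite le.
  - by rewrite (big_nth 0) big_mkord; apply: eq_bigr => i _; rewrite le.
apply: compact_closed; first exact: norm_hausdorff.
apply: continuous_compact.
  apply: continuous_subspaceT; apply: cont_sum => i.
  move=> w; apply: (@continuousZr_tmp _ _ _ (fun w : 'rV[R]_n => w ord0 i)).
  exact: coord_continuous.
apply: compact_closedI.
  exact: (@rV_compact R n (fun _ => `[0, 1]%classic) (fun _ => @segment_compact R 0 1)).
have -> : [set w : 'rV[R]_n | \sum_(i < n) w ord0 i = 1] =
  (fun w : 'rV[R]_n => \sum_(i < n) w ord0 i) @^-1` [set x | x = 1] by [].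
have cl1 : closed [set x : R | x = 1] by apply: closed_eq.
move: cl1; apply: (proj1 (continuous_closedP _)).
apply: cont_sumR => i; exact: coord_continuous.
Qed.


Lemma in_bigsetU (I : eqType) (s : seq I) (F : I -> set point) i p :
  i \in s -> F i p -> (\big[setU/set0]_(j <- s) F j) p.
Proof.
elim: s => [//|a s IH]; rewrite inE big_cons => /orP[/eqP <- Fp|iS Fp].
  by left.
by right; apply: IH.
Qed.

Lemma nbhd_star (K : {fset {fset point}}) x : exists W : set point,
  [/\ open W, W x & forall B, B \in K -> forall p, W p -> conv B p -> conv B x].
Proof.
pose F B := if `[< conv B x >] then set0 else conv B.
exists (~` \big[setU/set0]_(B <- K) F B); split.
- rewrite openC; apply: closed_bigsetU => B _; rewrite /F.
  by case: ifP => _; [apply: closed0 | apply: conv_closed].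
- move=> /= H.
  have : forall s : seq {fset point}, ~ (\big[setU/set0]_(B <- s) F B) x.
    elim => [|a s IH]; first by rewrite big_nil.
    rewrite big_cons => -[|//]; rewrite /F; case: ifPn => [//|/asboolPn].
    by [].
  by move/(_ K).
- move=> B BK p Wp Bp; apply: contrapT => Bx; apply: Wp.
  by apply: (in_bigsetU BK); rewrite /F; case: ifPn => // /asboolP.
Qed.

Definition cont_on (A : set R) (f : R -> point) := forall t, A t ->
  forall W, open W -> W (f t) ->
  exists N : set R, [/\ open N, N t & forall t', A t' -> N t' -> W (f t')].

Lemma within_cont_on (D : set R) (f : R -> point) : {within D, continuous f} -> cont_on D f.
Proof.
move=> /subspace_continuousP fc t Dt W oW Wt.
have := fc t Dt W (open_nbhs_nbhs (conj oW Wt)).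
rewrite /= nbhs_simpl /within /= nbhsE => -[N [oN Nt] NW].
by exists N; split => // t' At' Nt'; apply: NW.
Qed.

Lemma cont_on_within (D : set R) (f : R -> point) : cont_on D f -> {within D, continuous f}.
Proof.
move=> fc; apply/subspace_continuousP => t Dt W; rewrite nbhsE => -[U [oU Ut] UW].
have [N [oN Nt NU]] := fc t Dt U oU Ut.
rewrite /= nbhs_simpl /within /= nbhsE; exists N; first by split.
by move=> t' Nt' At'; apply: UW; apply: NU.
Qed.

End Top.


Section Cont.
Variables (R : realType) (m : nat).
Local Notation point := 'rV[R]_m.

Definition itv (a b : R) : set R := [set t | a <= t <= b].

Lemma small_pos (O : set R) (c : R) : open O -> O 0 -> 0 < c ->
  exists e, [/\ 0 < e, e <= c & O e].
Proof.
move=> oO O0 c0; have : nbhs (0 : R) O by apply: open_nbhs_nbhs.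
move=> /nbhs_ballP [e e0 eO].
exists (Num.min (e / 2) c); split.
- by rewrite lt_min c0 divr_gt0.
- by rewrite ge_min lexx orbT.
- apply: eO; rewrite /ball /= sub0r normrN ger0_norm; last first.
    by apply: ltW; rewrite lt_min c0 divr_gt0.
  apply: (le_lt_trans (y := e / 2)); first by rewrite ge_min lexx.
  by rewrite ltr_pdivrMr // ltr_pMr // ltr1n.
Qed.

Lemma cont_on_sub (D D' : set R) (f : R -> point) : D' `<=` D -> cont_on D f -> cont_on D' f.
Proof.
move=> DD fc t Dt W oW Wt; have [N [oN Nt NW]] := fc t (DD _ Dt) W oW Wt.
by exists N; split => // t' /DD; apply: NW.
Qed.

Lemma cont_on_ext (D : set R) (f g : R -> point) : (forall t, D t -> f t = g t) ->
  cont_on D f -> cont_on D g.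
Proof.
move=> fg fc t Dt W oW; rewrite -fg // => Wt; have [N [oN Nt NW]] := fc t Dt W oW Wt.
by exists N; split => // t' Dt' Nt'; rewrite -fg //; apply: NW.
Qed.

Lemma cont_on_glob (D : set R) (f : R -> point) : continuous f -> cont_on D f.
Proof.
move=> fc t Dt W oW Wt; exists (f @^-1` W); split => //.
by apply: (proj1 (continuousP f)).
Qed.

Lemma cont_on_comp (D D' : set R) (f : R -> point) (h : R -> R) : continuous h ->
  (forall t, D' t -> D (h t)) -> cont_on D f -> cont_on D' (fun t => f (h t)).
Proof.
move=> hc hD fc t Dt W oW Wt; have [N [oN Nt NW]] := fc (h t) (hD _ Dt) W oW Wt.
exists (h @^-1` N); split => //; first by apply: (proj1 (continuousP h)).
by move=> t' Dt' Nt'; apply: NW => //; apply: hD.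
Qed.

Lemma cont_on_glue (a b c : R) (f g : R -> point) : a <= b -> b <= c ->
  cont_on (itv a b) f -> cont_on (itv b c) g -> f b = g b ->
  cont_on (itv a c) (fun t => if t <= b then f t else g t).
Proof.
move=> ab bc fc gc fgb t /andP[ha hc] W oW.
have [tb|bt|tb] := ltgtP t b.
- move=> Wt.
  have [N [oN Nt NW]] := fc t (introT andP (conj ha (ltW tb))) W oW Wt.
  exists (N `&` [set x | x < b]); split => //.
    by apply: openI => //; apply: open_lt.
  move=> t' /andP[ha' _] [Nt' t'b]; rewrite /= (ltW t'b); apply: NW => //.
  by rewrite /itv /= ha' (ltW t'b).
- move=> Wt.
  have [N [oN Nt NW]] := gc t (introT andP (conj (ltW bt) hc)) W oW Wt.
  exists (N `&` [set x | x > b]); split => //.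
    by apply: openI => //; apply: open_gt.
  move=> t' /andP[_ hc'] [Nt' t'b]; rewrite /= leNgt t'b /=; apply: NW => //.
  by rewrite /itv /= hc' (ltW t'b).
- subst t => Wt.
  have [N1 [oN1 Nt1 NW1]] := fc b (introT andP (conj ab (lexx b))) W oW Wt.
  rewrite fgb in Wt.
  have [N2 [oN2 Nt2 NW2]] := gc b (introT andP (conj (lexx b) bc)) W oW Wt.
  exists (N1 `&` N2); split => //; first by apply: openI.
  move=> t' /andP[ha' hc'] [N1t N2t] /=; case: ifPn => t'b.
    by apply: NW1 => //; rewrite /itv /= ha' t'b.
  by apply: NW2 => //; rewrite /itv /= hc' ltW // ltNge.
Qed.

End Cont.


Section Sem.
Variables (R : realType) (m : nat) (AP : finType).
Local Notation point := 'rV[R]_m.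
Variables (K : {fset {fset point}}) (V : AP -> set point).
Hypothesis hM : polyhedral_model K V.
Let hK : simplicial_complex K := hM.1.
Local Notation P := (polyhedron K).

Definition cinv (U : set point) := U `<=` P /\
  forall A x y, A \in K -> relint A x -> relint A y -> U x -> U y.

Lemma lerpE (x p : point) l : lerp x p l = x + l *: (p - x).
Proof. by rewrite /lerp scalerBl scale1r scalerBr addrA addrAC. Qed.

Lemma aff_cont (u k : R) : continuous (fun t : R => u + t * k).
Proof.
move=> x; apply: cvgD; first exact: cvg_cst.
apply: cvgM; [exact: cvg_id | exact: cvg_cst].
Qed.

Lemma lerp_cont (x p : point) (h : R -> R) : continuous h ->
  continuous (fun t => lerp x p (h t)).
Proof.
move=> hc; under eq_fun do rewrite lerpE.
move=> t; apply: cvgD; first exact: cvg_cst.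
apply: cvgZ; [exact: hc | exact: cvg_cst].
Qed.

Lemma near_lerp (W : set point) x p : open W -> W x ->
  exists e, [/\ 0 < e, e <= 1 & W (lerp x p e)].
Proof.
move=> oW Wx.
have hc : continuous (@id R) by move=> t; apply: cvg_id.
have lc := lerp_cont (x:=x) (p:=p) hc.
have oO := proj1 (continuousP _) lc W oW.
have := @small_pos R _ 1 oO; case.
- by rewrite /= lerp0.
- exact: ltr01.
by move=> e [e0 e1 We]; exists e.
Qed.

Lemma inv_sem (phi : formula AP) : cinv (sem K V phi).
Proof.
elim: phi => [|p|f IHf|f IHf g IHg|f IHf|f IHf g IHg] /=.
- split => // A x y AK _ yA _; exact: relint_poly yA.
- have [S [SK eS]] := hM.2 p; rewrite eS; split.
    by move=> x [B SB xB]; have [BK _] := SK B SB; apply: relint_poly xB.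
  move=> A x y AK xA yA [B SB xB]; have [BK _] := SK B SB.
  by exists B => //; rewrite -(carrier_uniq hK AK BK xA xB).
- split; first by move=> x [].
  move=> A x y AK xA yA [Px nx]; split; first exact: relint_poly yA.
  by move=> fy; apply: nx; apply: (IHf.2 A y x).
- split; first by move=> x [/IHf.1].
  move=> A x y AK xA yA [fx gx]; split.
    exact: (IHf.2 A x y).
  exact: (IHg.2 A x y).
- split; first by move=> x [].
  move=> A x y AK xA yA [Px [W [oW Wx WU]]]; split; first exact: relint_poly yA.
  have [N [oN Ny NB]] := nbhd_star K y.
  exists N; split => // p [Np Pp].
  have [r [rK r0 pr]] := poly_cell hK Pp.
  have yr := NB r rK p Np (relint_conv pr).
  have Ar := conv_carrier hK AK rK yA yr.
  have xr : conv r x := conv_sub Ar (relint_conv xA).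
  have [e [e0 e1 We]] := near_lerp p oW Wx.
  have zr : relint r (lerp x p e) by apply: seg_relint xr pr _; rewrite e0 e1.
  have zU : sem K V f (lerp x p e) by apply: WU; split => //; apply: relint_poly zr.
  exact: (IHf.2 r _ p rK zr pr zU).
- split; first by move=> x [].
  move=> A x y AK xA yA [Px [pi [[pic piP] pi0 pif pig]]].
  split; first exact: relint_poly yA.
  have [N [oN Nx NB]] := nbhd_star K x.
  have pic' : cont_on (itv 0 1) pi by apply: within_cont_on.
  have I0 : itv 0 1 (0:R) by rewrite /itv /=; apply/andP; split; lra.
  have Nx0 : N (pi 0) by rewrite pi0.
  have [Oo [oO O0 ON]] := pic' 0 I0 N oN Nx0.
  have h2 : (0 : R) < 1/2 by lra.
  have [t0 [t0p t0h Ot0]] := @small_pos R Oo (1/2) oO O0 h2.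
  have t0I : itv 0 1 t0 by rewrite /itv /= (ltW t0p) /=; lra.
  have qU : sem K V f (pi t0).
    by apply: pif; exists t0 => //; rewrite /open_unit_I /= t0p /=; lra.
  have [r [rK r0 qr]] := poly_cell hK (IHf.1 _ qU).
  have xr : conv r x := NB r rK (pi t0) (ON t0 t0I Ot0) (relint_conv qr).
  have Ar := conv_carrier hK AK rK xA xr.
  have yr : conv r y := conv_sub Ar (relint_conv yA).
  have rU : relint r `<=` sem K V f by move=> z zr; apply: (IHf.2 r (pi t0) z).
  pose h t := (t0 - (1 - t0)) + t * (2 * (1 - t0)).
  have hI : forall t, itv (1/2) 1 t -> itv 0 1 (h t).
    move=> t /andP[t1 t2]; rewrite /itv /h /=; apply/andP; split; nra.
  exists (fun t => if t <= 1/2 then lerp y (pi t0) (0 + t * 2) else pi (h t)).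
  split.
  + split.
      apply: cont_on_within; change (cont_on (itv 0 1)
        (fun t => if t <= 1/2 then lerp y (pi t0) (0 + t * 2) else pi (h t))).
      apply: cont_on_glue.
      * by [].
      * lra.
      * by apply: cont_on_glob; apply: lerp_cont; apply: aff_cont.
      * by apply: cont_on_comp hI pic'; apply: aff_cont.
      * rewrite (_ : 0 + 1/2 * 2 = 1 :> R); last by field.
        by rewrite lerp1 /h; congr pi; field.
    move=> t /andP[t1 t2]; case: ifPn => th.
      apply: (conv_poly rK); apply: seg_conv yr (relint_conv qr) _.
      apply/andP; split; nra.
    apply: piP; apply: hI; rewrite /itv /= t2 andbT; apply: ltW; rewrite ltNge //.
  + have -> : ((0:R) <= 1/2) = true by apply/idP; lra.
    by rewrite mul0r addr0 lerp0.
  + move=> z [t /andP[t1 t2] <-]; case: ifPn => th.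
      by apply: rU; apply: seg_relint yr qr _; apply/andP; split; nra.
    apply: pif; exists (h t) => //; rewrite /open_unit_I /h /=.
    rewrite -ltNge in th; apply/andP; split; nra.
  + have -> : (1 <= 1/2 :> R) = false by apply/negbTE; rewrite -ltNge; lra.
    by rewrite /h (_ : t0 - (1 - t0) + 1 * (2 * (1 - t0)) = 1); last by field.
Qed.

End Sem.


Section Char.
Variables (R : realType) (m : nat) (AP : finType).
Local Notation point := 'rV[R]_m.
Variables (K : {fset {fset point}}) (V : AP -> set point).
Hypothesis hM : polyhedral_model K V.
Let hK : simplicial_complex K := hM.1.
Local Notation P := (polyhedron K).
Local Notation leq := (log_equiv K V).

Lemma leqv_sym x y : leq x y -> leq y x.
Proof. by move=> [Px [Py H]]; split => //; split => // phi; rewrite H. Qed.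

Lemma leqv_trans x y z : leq x y -> leq y z -> leq x z.
Proof.
move=> [Px [Py H]] [_ [Pz H']]; split => //; split => // phi.
by rewrite H H'.
Qed.

Lemma leqv_refl x : P x -> leq x x.
Proof. by move=> Px; split => //; split. Qed.

Lemma same_cell A x y : A \in K -> relint A x -> relint A y -> leq x y.
Proof.
move=> AK xA yA; split; first exact: relint_poly xA.
split; first exact: relint_poly yA.
move=> phi; have [_ H] := inv_sem hM phi; split.
  exact: H A x y AK xA yA.
exact: H A y x AK yA xA.
Qed.

Fixpoint bigAnd (psi : {fset point} -> formula AP) (l : seq {fset point}) : formula AP :=
  if l is B :: l' then FAnd (psi B) (bigAnd psi l') else FTop AP.

Lemma sem_bigAnd psi l q : sem K V (bigAnd psi l) q <->
  P q /\ forall B, B \in l -> sem K V (psi B) q.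
Proof.
elim: l => [|B l IH] /=; first by split => // -[].
split.
  move=> [fq /IH [Pq H]]; split => // g; rewrite inE => /orP[/eqP -> //|]; exact: H.
move=> [Pq H]; split; first by apply: H; rewrite inE eqxx.
by apply/IH; split => // g gl; apply: H; rewrite inE gl orbT.
Qed.

Lemma char_formula p : P p -> exists chi : formula AP,
  forall q, P q -> (sem K V chi q <-> leq p q).
Proof.
move=> Pp.
have /choice [psi Hpsi] : forall B : {fset point}, exists psi : formula AP,
  sem K V psi p /\ forall z, B \in K -> relint B z -> ~ leq p z -> ~ sem K V psi z.
  move=> B.
  case: (pselect (exists z, [/\ B \in K, relint B z & ~ leq p z])); last first.
    move=> H; exists (FTop AP); split => // z BK Bz nz; exfalso; apply: H.
    by exists z.
  move=> [z0 [BK Bz0 nz0]].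
  have Pz0 : P z0 by apply: relint_poly Bz0.
  have [phi Hphi] : exists phi, ~ (sem K V phi p <-> sem K V phi z0).
    apply: contrapT => H; apply: nz0; split => //; split => // phi.
    by apply: contrapT => H'; apply: H; exists phi.
  have Hz : forall z, relint B z -> (sem K V phi z <-> sem K V phi z0).
    by move=> z Bz; have [_ [_ e]] := same_cell BK Bz Bz0; apply: e.
  case: (pselect (sem K V phi p)) => php.
    exists phi; split => // z _ Bz _ phz; apply: Hphi; split => // _.
    by apply/(Hz z Bz).
  exists (FNeg phi); split => //= z _ Bz _ [_ nphz]; apply: Hphi; split => // phz0.
  by exfalso; apply: nphz; apply/(Hz z Bz).
exists (bigAnd psi K) => q Pq; split.
  move=> /sem_bigAnd [_ H]; apply: contrapT => npq.
  have [B [BK B0 Bq]] := poly_cell hK Pq.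
  have [_ H2] := Hpsi B; apply: (H2 q BK Bq npq); exact: H.
move=> [_ [_ H]]; apply/sem_bigAnd; split => // B BK.
by apply/H; have [] := Hpsi B.
Qed.

End Char.


Section Chain.
Variables (R : realType) (m : nat).
Local Notation point := 'rV[R]_m.
Variable (K : {fset {fset point}}).
Hypothesis hK : simplicial_complex K.
Local Notation P := (polyhedron K).

Lemma relint_ne (A : {fset point}) x : relint A x -> A != fset0.
Proof.
move=> [lam [_ h _]]; apply/negP => /eqP A0; move: h; rewrite A0 big_seq_fset0.
by move/eqP; rewrite eq_sym oner_eq0.
Qed.

Definition goodseg (U : set point) (p q : point) := exists A : {fset point},
  [/\ A \in K, relint A `<=` U, conv A p, conv A q &
      forall l, 0 < l < 1 -> relint A (lerp p q l)].

Inductive chain (U : set point) : point -> point -> Prop :=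
| ch1 p q : goodseg U p q -> chain U p q
| chS p q r : goodseg U p q -> U q -> chain U q r -> chain U p r.

Lemma chain_app U p q r : chain U p q -> U q -> goodseg U q r -> chain U p r.
Proof.
elim => [p0 q0 g0|p0 q0 r0 g0 Uq0 c IH] Uq gr.
  exact: (chS g0 Uq (ch1 gr)).
exact: (chS g0 Uq0 (IH Uq gr)).
Qed.

Definition simp_on (a b : R) (f : R -> point) :=
  [/\ cont_on (itv a b) f, (forall t, itv a b t -> P (f t)) &
  exists (k : nat) (s : nat -> R) (sg : nat -> {fset point}),
    [/\ s 0%N = a, s k = b, (forall i, (i < k)%N -> s i < s i.+1) &
        (forall i, (1 <= i <= k)%N ->
           is_cell_of K (sg i) /\ f @` [set t | s i.-1 < t < s i] `<=` relint (sg i))]].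

Lemma incr_mono k (s : nat -> R) : (forall i, (i < k)%N -> s i < s i.+1) ->
  forall i j, (i <= j <= k)%N -> s i <= s j.
Proof.
move=> hs i; elim => [|j IH]; first by case: i => //.
move=> /andP[ij jk]; rewrite leq_eqVlt in ij; case/orP: ij => [/eqP -> //|ij].
apply: (le_trans (IH _)); first by rewrite -ltnS ij /= ltnW.
by apply: ltW; apply: hs.
Qed.

Lemma aff_div_cont (a b : R) : continuous (fun t : R => (t - a) / (b - a)).
Proof.
have -> : (fun t : R => (t - a) / (b - a)) =
  (fun t => - (a / (b - a)) + t * (b - a)^-1).
  by apply: funext => t; rewrite mulrBl addrC.
exact: aff_cont.
Qed.

Lemma simp_on_seg U p q a b : a < b -> goodseg U p q ->
  simp_on a b (fun t => lerp p q ((t - a) / (b - a))).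
Proof.
move=> ab [A [AK AU Ap Aq Ai]].
have ba : 0 < b - a by rewrite subr_gt0.
have A0 : A != fset0.
  apply: (@relint_ne A (lerp p q (1/2))); apply: Ai; apply/andP; split; lra.
split.
- apply: cont_on_glob; apply: lerp_cont; exact: aff_div_cont.
- move=> t /andP[ta tb]; apply: (conv_poly AK); apply: seg_conv Ap Aq _.
  apply/andP; split; first by apply: divr_ge0; lra.
  by rewrite ler_pdivrMr // mul1r; lra.
- exists 1%N, (fun i => if i == 0%N then a else b), (fun _ => A); split => //.
    by case => //= _; rewrite eqxx.
  case => // -[] // _; split => //.
  move=> z [t /= /andP[ta tb] <-]; apply: Ai.
  apply/andP; split; first by apply: divr_gt0; lra.
  by rewrite ltr_pdivrMr // mul1r; lra.
Qed.

Lemma simp_on_glue a b c f g : simp_on a b f -> simp_on b c g -> f b = g b ->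
  simp_on a c (fun t => if t <= b then f t else g t).
Proof.
move=> [fc fP [k1 [s1 [g1 [s10 s1k s1i s1p]]]]].
move=> [gc gP [k2 [s2 [g2 [s20 s2k s2i s2p]]]]] fgb.
have ab : a <= b by rewrite -s10 -s1k; apply: (incr_mono s1i); rewrite leq0n leqnn.
have bc : b <= c by rewrite -s20 -s2k; apply: (incr_mono s2i); rewrite leq0n leqnn.
split.
- exact: cont_on_glue.
- move=> t /andP[ta tc] /=; case: ifPn => tb.
    by apply: fP; rewrite /itv /= ta tb.
  by apply: gP; rewrite /itv /= tc andbT ltW // ltNge.
- exists (k1 + k2)%N, (fun i => if (i <= k1)%N then s1 i else s2 (i - k1)%N),
    (fun i => if (i <= k1)%N then g1 i else g2 (i - k1)%N); split.
  + by rewrite /= ?leq0n.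
  + rewrite /=; case: (posnP k2) => [k20|k2p].
      by rewrite k20 addn0 leqnn s1k -s2k k20 s20.
    have -> : (k1 + k2 <= k1)%N = false by lia.
    by rewrite addKn.
  + move=> i ik /=; case: (ltngtP i k1) => [ik1|ik1|ik1].
    * exact: s1i.
    * rewrite subSn; last by lia.
      apply: s2i; lia.
    * subst i; rewrite s1k -s20 subSn // subnn; apply: s2i; lia.
  + move=> i /andP[i1 ik] /=; case: (leqP i k1) => ik1.
    * have -> : (i.-1 <= k1)%N = true by lia.
      have [cell img] := s1p i (introT andP (conj i1 ik1)); split => //.
      move=> z [t /andP[t1 t2] <-].
      have tb : t <= b.
        rewrite -s1k; apply: (le_trans (ltW t2)); apply: (incr_mono s1i); lia.
      rewrite tb; apply: img; exists t => //; by rewrite /= t1 t2.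
    * have j1 : (1 <= i - k1 <= k2)%N by lia.
      have [cell img] := s2p _ j1; split => //.
      have es : (if (i.-1 <= k1)%N then s1 i.-1 else s2 (i.-1 - k1)%N) = s2 (i - k1).-1.
        case: ifPn => h.
          have -> : i.-1 = k1 by lia.
          have -> : (i - k1).-1 = 0%N by lia.
          by rewrite s1k s20.
        congr s2; lia.
      rewrite es.
      move=> z [t /andP[t1 t2] <-].
      have tb : b < t.
        apply: (le_lt_trans _ t1); rewrite -s20; apply: (incr_mono s2i); lia.
      rewrite leNgt tb /=; apply: img; exists t => //; by rewrite /= t1 t2.
Qed.

Lemma chain_simp U p q : chain U p q -> forall a b, a < b ->
  exists f, [/\ simp_on a b f, f a = p, f b = q & forall t, a < t < b -> U (f t)].
Proof.
elim => [p0 q0 g0|p0 q0 r0 g0 Uq0 c IH] a b ab.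
  exists (fun t => lerp p0 q0 ((t - a) / (b - a))); split.
  - exact: simp_on_seg ab g0.
  - by rewrite subrr mul0r lerp0.
  - by rewrite divff ?lerp1 // subr_eq0 gt_eqF.
  - move=> t /andP[ta tb]; have [A [_ AU _ _ Ai]] := g0; apply: AU; apply: Ai.
    have ba : 0 < b - a by rewrite subr_gt0.
    apply/andP; split; first by apply: divr_gt0; lra.
    by rewrite ltr_pdivrMr // mul1r; lra.
pose c' := (a + b) / 2.
have ac : a < c' by rewrite /c'; lra.
have cb : c' < b by rewrite /c'; lra.
have [f2 [f2s f2a f2b f2U]] := IH _ _ cb.
exists (fun t => if t <= c' then lerp p0 q0 ((t - a) / (c' - a)) else f2 t); split.
- apply: simp_on_glue; first exact: simp_on_seg ac g0.
    exact: f2s.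
  by rewrite divff ?lerp1 ?f2a // subr_eq0 gt_eqF.
- by rewrite ltW // subrr mul0r lerp0.
- by have -> : (b <= c') = false by apply/negbTE; rewrite -ltNge.
- move=> t /andP[ta tb]; case: ifPn => tc.
    rewrite le_eqVlt in tc; case/orP: tc => [/eqP ->|tc].
      by rewrite divff ?lerp1 // subr_eq0 gt_eqF.
    have [A [_ AU _ _ Ai]] := g0; apply: AU; apply: Ai.
    have ba : 0 < c' - a by rewrite subr_gt0.
    apply/andP; split; first by apply: divr_gt0; lra.
    by rewrite ltr_pdivrMr // mul1r; lra.
  by apply: f2U; rewrite tb andbT ltNge.
Qed.

Lemma simp_on_path f : simp_on 0 1 f -> simplicial_path K f.
Proof.
move=> [fc fP H]; split => //; split => //.
exact: cont_on_within.
Qed.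

End Chain.


Section Conv.
Variables (R : realType) (m : nat).
Local Notation point := 'rV[R]_m.
Variable (K : {fset {fset point}}).
Hypothesis hK : simplicial_complex K.
Local Notation P := (polyhedron K).

Lemma lerp_sym (p q : point) l : lerp p q l = lerp q p (1 - l).
Proof.
rewrite /lerp [RHS]addrC; congr (_ *: _ + _ *: _).
by rewrite opprB addrC subrK.
Qed.

Variables (U : set point) (pi : R -> point).
Hypothesis hU : cinv K U.
Hypothesis pic : cont_on (itv 0 1) pi.
Hypothesis piU : forall t, 0 < t < 1 -> U (pi t).

Lemma near_seg t : itv 0 1 t -> exists Oo : set R, [/\ open Oo, Oo t &
  forall t', 0 < t' < 1 -> Oo t' ->
    goodseg K U (pi t') (pi t) /\ goodseg K U (pi t) (pi t')].
Proof.
move=> It; have [N [oN Nx NB]] := nbhd_star K (pi t).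
have [Oo [oO Ot ON]] := @pic t It N oN Nx.
exists Oo; split => // t' ht' Ot'.
have It' : itv 0 1 t' by case/andP: ht' => h1 h2; rewrite /itv /= ltW // ltW.
have Ut' := piU ht'.
have [r [rK r0 rt']] := poly_cell hK (hU.1 _ Ut').
have rt : conv r (pi t) := NB r rK (pi t') (ON t' It' Ot') (relint_conv rt').
have rU : relint r `<=` U by move=> z rz; apply: (hU.2 r (pi t') z).
split; exists r; split => //; first exact: relint_conv.
- move=> l /andP[l0 l1]; rewrite lerp_sym; apply: seg_relint rt rt' _.
  by apply/andP; split; lra.
- exact: relint_conv.
- move=> l /andP[l0 l1]; apply: seg_relint rt rt' _.
  by apply/andP; split; lra.
Qed.

Lemma path_chain : chain K U (pi 0) (pi 1).
Proof.
pose A := [set t : R | 0 < t < 1].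
pose Good t := chain K U (pi 0) (pi t).
have loc : forall t, A t -> exists Oo : set R, [/\ open Oo, Oo t &
    forall t', A t' -> Oo t' -> (Good t <-> Good t')].
  move=> t At; have It : itv 0 1 t by case/andP: At => h1 h2; rewrite /itv /= ltW // ltW.
  have [Oo [oO Ot HO]] := near_seg It; exists Oo; split => // t' At' Ot'.
  have [s1 s2] := HO t' At' Ot'; split => c.
    exact: chain_app c (piU At) s2.
  exact: chain_app c (piU At') s1.
have I0 : itv 0 1 (0 : R) by rewrite /itv /=; apply/andP; split; lra.
have I1 : itv 0 1 (1 : R) by rewrite /itv /=; apply/andP; split; lra.
have h2 : (0 : R) < 1/2 by lra.
have [t0 [At0 Gt0]] : exists t0, A t0 /\ Good t0.
  have [Oo [oO O0 HO]] := near_seg I0.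
  have [e [e0 e1 Oe]] := @small_pos R Oo (1/2) oO O0 h2.
  have Ae : A e by rewrite /A /= e0 /=; lra.
  by exists e; split => //; apply: ch1; case: (HO e Ae Oe).
have allG : forall t, A t -> Good t.
  have cA : connected A.
    apply/connected_intervalP => x y /andP[x0 x1] /andP[y0 y1] z /andP[xz zy].
    by rewrite /A /=; apply/andP; split; lra.
  pose B := [set t | A t /\ Good t].
  have BA : B = A.
    apply: cA.
    - by exists t0.
    - exists [set t | exists Oo : set R, [/\ open Oo, Oo t &
                forall t', A t' -> Oo t' -> Good t']].
        rewrite openE => t [Oo [oO Ot HO]].
        have : nbhs t Oo by apply: open_nbhs_nbhs.
        apply: filterS => t'' Ot''.
        by exists Oo.
      apply/seteqP; split => t.
        move=> [At Gt]; split => //; have [Oo [oO Ot HO]] := loc t At.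
        by exists Oo; split => // t' At' Ot'; apply/(HO t' At' Ot').
      by move=> [At [Oo [_ Ot HO]]]; split => //; apply: HO.
    - exists (~` [set t | exists Oo : set R, [/\ open Oo, Oo t &
                forall t', A t' -> Oo t' -> ~ Good t']]).
        apply: open_closedC; rewrite openE => t [Oo [oO Ot HO]].
        have : nbhs t Oo by apply: open_nbhs_nbhs.
        apply: filterS => t'' Ot''.
        by exists Oo.
      apply/seteqP; split => t.
        move=> [At Gt]; split => // -[Oo [_ Ot HO]]; exact: HO t At Ot Gt.
      move=> [At nb]; split => //; apply: contrapT => nG; apply: nb.
      have [Oo [oO Ot HO]] := loc t At.
      by exists Oo; split => // t' At' Ot' Gt'; apply: nG; apply/(HO t' At' Ot').
  move=> t At; have Bt : B t by rewrite BA; exact: At.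
  by case: Bt.
have [Oo [oO O1 HO]] := near_seg I1.
have oOo' : open ((fun e : R => 1 + e * (-1)) @^-1` Oo).
  by apply: (proj1 (continuousP _)) => //; apply: aff_cont.
have Oo'0 : ((fun e : R => 1 + e * (-1)) @^-1` Oo) 0 by rewrite /= mul0r addr0.
have [e [e0 e1 Oe]] := @small_pos R _ (1/2) oOo' Oo'0 h2.
have Ae : A (1 + e * (-1)) by rewrite /A /=; apply/andP; split; lra.
have [s1 _] := HO _ Ae Oe.
exact: chain_app (allG _ Ae) (piU Ae) s1.
Qed.

End Conv.


Section Main.
Variables (R : realType) (m : nat) (AP : finType).
Local Notation point := 'rV[R]_m.
Variables (K : {fset {fset point}}) (V : AP -> set point).
Hypothesis hM : polyhedral_model K V.
Let hK : simplicial_complex K := hM.1.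
Local Notation P := (polyhedron K).
Local Notation leq := (log_equiv K V).

Lemma lift x y px : leq x y -> simplicial_path K px -> px 0 = x ->
  exists2 py, simplicial_path K py /\ py 0 = y & path_rel leq px py.
Proof.
move=> xy [[pxc pxP] [k [s [sg [s0 sk si sp]]]]] px0.
have pxc' : cont_on (itv 0 1) px by apply: within_cont_on.
have Py : P y by case: xy => _ [].
have sI : forall i, (i <= k)%N -> itv 0 1 (s i).
  move=> i ik; rewrite /itv /= -s0 -sk; apply/andP; split; apply: (incr_mono si); lia.
suff : forall j, (j <= k)%N -> exists g, [/\ simp_on K 0 (s j) g, g 0 = y &
    forall t, itv 0 (s j) t -> leq (px t) (g t)].
  move/(_ k (leqnn k)) => [g [gs g0 gl]]; rewrite sk in gs gl.
  exists g; first by split => //; apply: simp_on_path.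
  by move=> t It; apply: gl.
elim => [_|j IH jk].
  exists (fun _ => y); split.
  - rewrite s0; split.
    + by apply: cont_on_glob; apply: cst_continuous.
    + by move=> t _.
    + exists 0%N, (fun _ => 0), (fun _ => fset0); split => // i.
      by case/andP => /leq_trans H /H.
  - by [].
  - move=> t; rewrite s0 /itv /= => /andP[t0 t1].
    have -> : t = 0 by apply/eqP; rewrite eq_le t1 t0.
    by rewrite px0.
have [g [gs g0 gl]] := IH (ltnW jk).
pose a := s j; pose b := s j.+1.
have ab : a < b by apply: si.
have Ia : itv 0 1 a := sI j (ltnW jk).
have Ib : itv 0 1 b := sI j.+1 jk.
have [a0 a1] := andP Ia; have [b0 b1] := andP Ib.
have [sgc sgi] := sp j.+1 jk.
have inab : forall t, a < t < b -> relint (sg j.+1) (px t).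
  by move=> t ht; apply: sgi; exists t.
pose c := (a + b) / 2.
have hc : a < c < b by rewrite /c; apply/andP; split; lra.
have zr := inab c hc.
have Pz : P (px c) by apply: relint_poly zr; case: sgc.
have [sgK _] := sgc.
have Pb : P (px b) by apply: pxP.
have [chz Hz] := char_formula hM Pz.
have [chb Hb] := char_formula hM Pb.
have Hgam : sem K V (FGamma chz chb) (px a).
  split; first by apply: pxP.
  exists (fun t => px (a + t * (b - a))); split.
  - split.
      apply: cont_on_within; apply: cont_on_comp pxc'; first by apply: aff_cont.
      move=> t /andP[t0 t1].
      have p1 : 0 <= t * (b - a) by apply: mulr_ge0 => //; rewrite subr_ge0 ltW.
      have p2 : t * (b - a) <= b - a by rewrite ler_piMl // subr_ge0 ltW.
      by change (0 <= a + t * (b - a) <= 1); apply/andP; split; lra.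
    move=> t /andP[t0 t1]; apply: pxP.
    have p1 : 0 <= t * (b - a) by apply: mulr_ge0 => //; rewrite subr_ge0 ltW.
    have p2 : t * (b - a) <= b - a by rewrite ler_piMl // subr_ge0 ltW.
    by change (0 <= a + t * (b - a) <= 1); apply/andP; split; lra.
  - by rewrite mul0r addr0.
  - move=> w [t /andP[t0 t1] <-].
    have p1 : 0 < t * (b - a) by apply: mulr_gt0 => //; rewrite subr_gt0.
    have p2 : t * (b - a) < b - a by rewrite gtr_pMl // subr_gt0.
    have ht : a < a + t * (b - a) < b by apply/andP; split; lra.
    have wr := inab _ ht.
    apply/(Hz _ (relint_poly sgK wr)).
    exact: (@same_cell R m AP K V hM _ _ _ sgK zr wr).
  - rewrite /= mul1r addrC subrK; apply/(Hb _ Pb); exact: leqv_refl.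
have [_ [Pga ga]] := gl a (introT andP (conj (proj1 (andP Ia)) (lexx a))).
have := (ga (FGamma chz chb)).1 Hgam.
move=> [_ [pi [[pic piP] pi0 pif pig]]].
have hU := inv_sem hM chz.
have piU : forall t, 0 < t < 1 -> sem K V chz (pi t).
  by move=> t ht; apply: pif; exists t.
have ch := path_chain hK hU (within_cont_on pic) piU.
have [h [hs ha hb hU']] := chain_simp ch ab.
exists (fun t => if t <= a then g t else h t); split.
- apply: simp_on_glue => //; by rewrite ha pi0.
- by rewrite g0 ifT //; case/andP: Ia.
- move=> t /andP[t0 tb]; case: ifPn => ta.
    by apply: gl; rewrite /itv /= t0 ta.
  rewrite -ltNge in ta.
  rewrite le_eqVlt in tb; case/orP: tb => [/eqP ->|tb].
    have Pw : P (pi 1) := (inv_sem hM chb).1 _ pig.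
    by rewrite hb; apply/(Hb _ Pw).
  have htt : a < t < b by rewrite ta tb.
  have Ph : P (h t) by apply: hU.1; apply: hU'.
  have zh : leq (px c) (h t) by apply/(Hz _ Ph); apply: hU'.
  have zt : leq (px c) (px t) := @same_cell R m AP K V hM _ _ _ sgK zr (inab _ htt).
  exact: leqv_trans (leqv_sym zt) zh.
Qed.

Theorem main : simplicial_bisimulation K V (log_equiv K V).
Proof.
split; first by move=> x y [Px [Py _]].
move=> x y xy; split.
- by move=> p; have [_ [_ H]] := xy; apply: (H (FAtom p)).
- by move=> px pxs px0; exact: (lift xy pxs px0).
- move=> py pys py0; have [px [pxs px0] r] := lift (leqv_sym xy) pys py0.
  by exists px => // t It; apply: leqv_sym; apply: r.
Qed.

End Main.

Theorem mainTheorem13 (R : realType) (m : nat) (AP : finType)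
    (K : {fset {fset 'rV[R]_m}}) (V : AP -> set 'rV[R]_m) :
  polyhedral_model K V ->
  simplicial_bisimulation K V (log_equiv K V).
Proof. by move=> hM; apply: main. Qed.
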